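(* Let $p\in(0,1]$, let $X\ne\{0\}$ be a finite-dimensional $p$-Banach space and let $Z\subset B_X$ be a symmetric set with $\mathrm{co}_p(Z)=B_X$. Let $\mathcal B$ be the set of all algebraic bases of $X$ consisting of points of $Z$. Then for every $x\in X$, \[\|x\|=\min\Big\{\Big(\sum_{b\in\mathfrak b}|a_b|^p\Big)^{1/p}:\mathfrak b\in\mathcal B,\ a\in\mathbb R^{\mathfrak b}\text{ with }x=\sum_{b\in\mathfrak b}a_bb\Big\}.\]
   Context: A $p$-Banach space is a complete vector space with a $p$-norm (norm axioms with $\|x+y\|^p\le\|x\|^p+\|y\|^p$ replacing the triangle inequality); $B_X$ is its closed unit ball. A set $A\subset X$ is $p$-convex if $\lambda x+\mu y\in A$ whenever $x,y\in A$ and $\lambda,\mu\ge0$ with $\lambda^p+\mu^p=1$; $\mathrm{co}_p(A)$ is the smallest $p$-convex set containing $A$. $Z$ symmetric means $Z=-Z$. *)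

(* Defs.v *)
From HB Require Import structures.
From mathcomp Require Import all_boot all_order all_algebra.
From mathcomp Require Import all_classical all_reals all_analysis.
Set Implicit Arguments. Unset Strict Implicit. Unset Printing Implicit Defensive.
Import Order.TTheory GRing.Theory Num.Theory.
Local Open Scope ring_scope.
Local Open Scope classical_set_scope.

Section PBanach.
Variables (R : realType) (V : vectType R).

Definition is_pnorm (p : R) (nrm : V -> R) : Prop :=
  [/\ forall x, 0 <= nrm x,
      forall x, nrm x = 0 -> x = 0,
      forall (l : R) x, nrm (l *: x) = `|l| * nrm x &
      forall x y, nrm (x + y) `^ p <= nrm x `^ p + nrm y `^ p].

Definition pnorm_complete (nrm : V -> R) : Prop :=
  forall u : nat -> V,
    (forall e : R, 0 < e -> exists N : nat, forall m n : nat,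
        (N <= m)%N -> (N <= n)%N -> nrm (u m - u n) < e) ->
    exists l : V, forall e : R, 0 < e -> exists N : nat, forall n : nat,
        (N <= n)%N -> nrm (u n - l) < e.

Definition unit_ball (nrm : V -> R) : set V := [set x | nrm x <= 1].

Definition p_convex (p : R) (A : set V) : Prop :=
  forall x y (l m : R), A x -> A y -> 0 <= l -> 0 <= m ->
    l `^ p + m `^ p = 1 -> A (l *: x + m *: y).

Definition co_p (p : R) (Z : set V) : set V :=
  [set x | forall A : set V, p_convex p A -> Z `<=` A -> A x].

Definition symmetric_set (Z : set V) : Prop := forall z, Z z <-> Z (- z).

Definition Zbasis (Z : set V) (b : seq V) : Prop :=
  basis_of fullv b /\ (forall v, v \in b -> Z v).

Definition pcoef_norm (p : R) (n : nat) (a : 'I_n -> R) : R :=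
  (\sum_(i < n) `|a i| `^ p) `^ (p^-1).

End PBanach.

(* Main.v *)
Require Import Defs.
From HB Require Import structures.
From mathcomp Require Import all_boot all_order all_algebra.
From mathcomp Require Import all_classical all_reals all_analysis.
From mathcomp Require Import ring lra.
Set Implicit Arguments. Unset Strict Implicit. Unset Printing Implicit Defensive.
Import Order.TTheory GRing.Theory Num.Theory.
Local Open Scope ring_scope.
Local Open Scope classical_set_scope.

Section Conc.
Variable R : realType.

Lemma powRK (a q : R) : 0 <= a -> q != 0 -> (a `^ q) `^ (q^-1) = a.
Proof. by move=> a0 q0; rewrite -powRrM mulfV // powRr1. Qed.

Lemma concave_powR (p w a b : R) : 0 < p -> p <= 1 -> 0 <= w -> w <= 1 ->
  0 <= a -> 0 <= b ->
  w * a `^ p + (1 - w) * b `^ p <= (w * a + (1 - w) * b) `^ p.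
Proof.
move=> p0 p1 w0 w1 a0 b0.
have q1 : 1 <= p^-1 by rewrite invf_ge1.
have := @convex_powR R _ q1 (Itv01 w0 w1) (a `^ p) (b `^ p).
rewrite !inE /= !in_itv /= !powR_ge0 => /(_ isT isT).
rewrite [X in X `^ _ <= _]convRE /= !powRK ?gt_eqF // => H.
rewrite convRE /= /unstable.onem in H.
have -> : w * a `^ p + (1 - w) * b `^ p =
   ((w * a `^ p + (1 - w) * b `^ p) `^ p^-1) `^ p.
  by rewrite -powRrM mulVf ?gt_eqF // powRr1 // addr_ge0 // mulr_ge0 ?powR_ge0 ?subr_ge0.
apply: ge0_ler_powR; first exact: ltW.
- by rewrite nnegrE powR_ge0.
- by rewrite nnegrE addr_ge0 // mulr_ge0 ?subr_ge0.
exact: H.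
Qed.
End Conc.

Section OneD.
Variables (R : realType) (p : R).
Hypotheses (p0 : 0 < p) (p1 : p <= 1).

Lemma term_ineq (s r c d : R) : s < 0 -> 0 < r -> c != 0 ->
  0 <= c * (c + s * d) -> 0 <= c * (c + r * d) ->
  r * `|c + s * d| `^ p + (- s) * `|c + r * d| `^ p <= (r - s) * `|c| `^ p.
Proof.
move=> s0 r0 c0 hu hv.
set u := c + s * d; set v := c + r * d.
have rs : 0 < r - s by lra.
pose w := r / (r - s).
have w0 : 0 <= w by rewrite /w divr_ge0 // ltW.
have w1 : w <= 1 by rewrite /w ler_pdivrMr // mul1r; lra.
have ew : 1 - w = - s / (r - s).
  by rewrite /w; field; rewrite gt_eqF.
have ec : `|c| = w * `|u| + (1 - w) * `|v|.
  rewrite ew /w.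
  have [cp|cn] := ltP 0 c.
    have u0 : 0 <= u by rewrite -(pmulr_rge0 _ cp).
    have v0 : 0 <= v by rewrite -(pmulr_rge0 _ cp).
    rewrite !ger0_norm ?(ltW cp) // /u /v; field; rewrite gt_eqF //.
  have cn' : c < 0 by rewrite lt_neqAle c0 cn.
  have u0 : u <= 0 by rewrite -(nmulr_rge0 _ cn').
  have v0 : v <= 0 by rewrite -(nmulr_rge0 _ cn').
  rewrite !ler0_norm ?cn // /u /v; field; rewrite gt_eqF //.
have := concave_powR p0 p1 w0 w1 (normr_ge0 u) (normr_ge0 v).
rewrite -ec ew /w => H.
have -> : (r - s) * `|c| `^ p =
  (r - s) * (r / (r - s) * `|u| `^ p + - s / (r - s) * `|v| `^ p)
  + (r - s) * (`|c| `^ p - (r / (r - s) * `|u| `^ p + - s / (r - s) * `|v| `^ p)).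
  by ring.
have -> : (r - s) * (r / (r - s) * `|u| `^ p + - s / (r - s) * `|v| `^ p)
   = r * `|u| `^ p + (- s) * `|v| `^ p.
  by field; rewrite gt_eqF.
rewrite lerDl mulr_ge0 ?subr_ge0 //; lra.
Qed.
End OneD.

Section OneD2.
Variables (R : realType) (p : R).
Hypotheses (p0 : 0 < p) (p1 : p <= 1).

Lemma exists_min (I : finType) (P : pred I) (F : I -> R) i0 : P i0 ->
  exists j, P j /\ forall i, P i -> F j <= F i.
Proof. by move=> Pi0; case: (arg_minP F Pi0) => j Pj H; exists j. Qed.

Lemma exists_max (I : finType) (P : pred I) (F : I -> R) i0 : P i0 ->
  exists j, P j /\ forall i, P i -> F i <= F j.
Proof. by move=> Pi0; case: (arg_maxP F Pi0) => j Pj H; exists j. Qed.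

Lemma sign_fact (c d t rho : R) : d != 0 -> rho = - c / d ->
  c * (c + t * d) = d ^+ 2 * rho * (rho - t).
Proof. by move=> d0 ->; field. Qed.

Lemma root_pos (I : finType) (c d : I -> R) i0 :
  (forall i, c i != 0) -> d i0 != 0 -> 0 < - c i0 / d i0 ->
  exists t j, c j + t * d j = 0 /\
   \sum_i `|c i + t * d i| `^ p <= \sum_i `|c i| `^ p.
Proof.
move=> c0 di0 ri0.
pose rho i := - c i / d i.
have rho0 i : d i != 0 -> rho i != 0.
  by move=> di; rewrite /rho mulf_neq0 ?invr_eq0 // oppr_eq0.
have rootE i t : d i != 0 -> c i + t * d i = d i * (t - rho i).
  by move=> di; rewrite /rho; field.
pose P i := (d i != 0) && (0 < rho i).
pose N i := (d i != 0) && (rho i < 0).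
have [jr [Pjr Hjr]] := exists_min rho (i0 := i0) (P := P) (introT andP (conj di0 ri0)).
set r := rho jr.
have r0 : 0 < r by case/andP: Pjr.
pose f t := \sum_i `|c i + t * d i| `^ p.
have f0 : f 0 = \sum_i `|c i| `^ p by apply: eq_bigr => i _; rewrite mul0r addr0.
have sgn (s t : R) : s < 0 -> (forall i, N i -> rho i <= s) -> s <= t -> t <= r ->
    forall i, 0 <= c i * (c i + t * d i).
  move=> s0 Ns st tr i.
  have [->|di] := eqVneq (d i) 0; first by rewrite mulr0 addr0 -expr2 sqr_ge0.
  rewrite (sign_fact t di (erefl (rho i))).
  have [rp|rn] := ltP 0 (rho i).
    have := Hjr i (introT andP (conj di rp)); rewrite -/r => rr.
    by rewrite mulr_ge0 // ?subr_ge0 ?(le_trans tr) // mulr_ge0 ?sqr_ge0 // ltW.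
  have rn' : rho i < 0 by rewrite lt_neqAle rn rho0.
  have := Ns i (introT andP (conj di rn')) => rs.
  rewrite -mulrA mulr_ge0 ?sqr_ge0 // nmulr_rge0 // subr_le0; exact: le_trans st.
have sumineq (s : R) : s < 0 -> (forall i, N i -> rho i <= s) ->
    r * f s + (- s) * f r <= (r - s) * f 0.
  move=> s0 Ns; rewrite f0 /f !mulr_sumr -big_split /=.
  apply: ler_sum => i _; apply: term_ineq => //.
  - exact: (sgn s s s0 Ns (lexx s) (ltW (lt_trans s0 r0))).
  - exact: (sgn s r s0 Ns (ltW (lt_trans s0 r0)) (lexx r)).
have fge0 t : 0 <= f t by apply: sumr_ge0 => i _; exact: powR_ge0.
have rootr : c jr + r * d jr = 0.
  by case/andP: Pjr => dj _; rewrite rootE // subrr mulr0.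
case: (pselect (exists i, N i)) => [[k Nk]|noN].
  have [js [Njs Hjs]] := exists_max rho (i0 := k) (P := N) Nk.
  set s := rho js.
  have s0 : s < 0 by case/andP: Njs.
  have H := sumineq s s0 Hjs.
  have roots : c js + s * d js = 0.
    by case/andP: Njs => dj _; rewrite rootE // subrr mulr0.
  have [fsr|frs] := leP (f s) (f r).
    exists s, js; split => //; rewrite -f0.
    have : (r - s) * f s <= (r - s) * f 0.
      apply: le_trans H; rewrite mulrBl lerD2l -mulNr ler_wpM2l //; lra.
    by rewrite ler_pM2l //; lra.
  exists r, jr; split => //; rewrite -f0.
  have : (r - s) * f r <= (r - s) * f 0.
    apply: le_trans H; rewrite mulrBl -mulNr lerD2r ler_wpM2l //; lra.
  by rewrite ler_pM2l //; lra.
have Ns : forall i, N i -> rho i <= - r.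
  by move=> i Ni; exfalso; apply: noN; exists i.
have s0 : - r < 0 by lra.
have H := sumineq _ s0 Ns.
have fmr : f 0 <= f (- r).
  rewrite f0; apply: ler_sum => i _.
  apply: ge0_ler_powR; [exact: ltW | exact: normr_ge0 | exact: normr_ge0 |].
  have [->|di] := eqVneq (d i) 0; first by rewrite mulr0 addr0.
  have ri : 0 < rho i.
    rewrite lt_neqAle eq_sym rho0 //=; rewrite leNgt; apply/negP => rn.
    by apply: noN; exists i; rewrite /N di.
  have e1 : c i = - (d i * rho i) by rewrite /rho; field.
  rewrite e1; move: ri; generalize (rho i) => q qi.
  have -> : - (d i * q) + - r * d i = - (d i * (q + r)) by ring.
  rewrite !normrN !normrM ler_wpM2l // !ger0_norm //; lra.
exists r, jr; split => //; rewrite -f0.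
have : r * f r <= r * f 0.
  rewrite opprK in H; nra.
by rewrite ler_pM2l.
Qed.

Lemma exists_root (I : finType) (c d : I -> R) :
  (forall i, c i != 0) -> (exists i, d i != 0) ->
  exists t j, c j + t * d j = 0 /\
   \sum_i `|c i + t * d i| `^ p <= \sum_i `|c i| `^ p.
Proof.
move=> c0 [i0 di0].
have r0 : - c i0 / d i0 != 0 by rewrite mulf_neq0 ?invr_eq0 // oppr_eq0.
have [rp|rn] := ltP 0 (- c i0 / d i0); first exact: root_pos rp.
have rn' : - c i0 / d i0 < 0 by rewrite lt_neqAle r0 rn.
have := @root_pos I c (fun i => - d i) i0 c0 _ _.
rewrite oppr_eq0 => /(_ di0) [].
  by rewrite invrN mulrN oppr_gt0.
move=> t [j [e1 e2]]; exists (- t), j; split.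
  by rewrite -e1 mulNr mulrN.
by under eq_bigr do rewrite mulNr -mulrN.
Qed.
End OneD2.

Section Reps.
Variables (R : realType) (V : vectType R) (p : R) (Z : set V).
Hypotheses (p0 : 0 < p) (p1 : p <= 1).

Definition vec (s : seq (R * V)) : V := \sum_(q <- s) q.1 *: q.2.
Definition cost (s : seq (R * V)) : R := \sum_(q <- s) `|q.1| `^ p.
Definition inZ (s : seq (R * V)) := forall q, q \in s -> Z q.2.

Lemma cost_ge0 s : 0 <= cost s.
Proof. by apply: sumr_ge0 => q _; exact: powR_ge0. Qed.

Lemma remove_zero s : inZ s -> (exists q, q \in s /\ q.1 = 0) ->
  exists s', (size s' < size s)%N /\ inZ s' /\ vec s' = vec s /\ cost s' = cost s.
Proof.
move=> sZ [q0 [q0s q00]].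
exists (seq.filter (fun q => q.1 != 0) s); split; [|split; [|split]].
- rewrite size_filter -(count_predC (fun q : R * V => q.1 != 0) s).
  rewrite -[X in (X < _)%N]addn0 ltn_add2l lt0n -lt0n -has_count.
  by apply/hasP; exists q0 => //=; rewrite q00 eqxx.
- by move=> q; rewrite mem_filter => /andP[_ /sZ].
- rewrite /vec big_filter [RHS](bigID (fun q : R * V => q.1 != 0)) /=.
  by rewrite [X in _ = _ + X]big1 ?addr0 // => q; rewrite negbK => /eqP ->; rewrite scale0r.
- rewrite /cost big_filter [RHS](bigID (fun q : R * V => q.1 != 0)) /=.
  rewrite [X in _ = _ + X]big1 ?addr0 // => q; rewrite negbK => /eqP ->.
  by rewrite normr0 powR0 // gt_eqF.
Qed.

Lemma dep_of_notfree (X : seq V) : ~~ free X ->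
  exists k : 'I_(size X) -> R, \sum_(i < size X) k i *: X`_i = 0 /\ exists i, k i != 0.
Proof.
move=> nf.
case: (pselect (exists k : 'I_(size X) -> R, \sum_(i < size X) k i *: X`_i = 0 /\ exists i, k i != 0)) => // H.
exfalso; move/negP: nf; apply.
have /freeP : forall k : 'I_(size X) -> R, \sum_(i < size X) k i *: (in_tuple X)`_i = 0 -> forall i, k i = 0.
  move=> k Hk i; case: (eqVneq (k i) 0) => // ki.
  by exfalso; apply: H; exists k; split => //; exists i.
by [].
Qed.

Lemma reduce_step s : inZ s -> ~~ free (map snd s) ->
  ~ (exists q, q \in s /\ q.1 = 0) ->
  exists s', size s' = size s /\ inZ s' /\ vec s' = vec s /\ cost s' <= cost s /\
     (exists q, q \in s' /\ q.1 = 0).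
Proof.
move=> sZ nf nz.
set X := map snd s.
have [k [k0 [i0 ki0]]] := dep_of_notfree nf.
pose c (i : 'I_(size X)) := (nth (0, 0) s i).1.
have Xi (i : 'I_(size X)) : X`_i = (nth (0,0) s i).2.
  by rewrite /X (nth_map (0,0)) // -(size_map snd s) ltn_ord.
have c0 i : c i != 0.
  apply/eqP => ci; apply: nz; exists (nth (0,0) s i); split => //.
  by apply: mem_nth; rewrite -(size_map snd s) ltn_ord.
have [t [j [tj tle]]] := exists_root p0 p1 c0 (ex_intro _ i0 ki0).
have vecs : vec s = \sum_(i < size X) c i *: X`_i.
  rewrite /vec (big_nth (0,0)) /X -(size_map snd s) big_mkord.
  by apply: eq_bigr => i _; rewrite Xi.
have costs : cost s = \sum_(i < size X) `|c i| `^ p.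
  rewrite /cost (big_nth (0,0)) /X -(size_map snd s) big_mkord.
  by apply: eq_bigr => i _.
exists [seq (c i + t * k i, X`_i) | i <- enum 'I_(size X)].
split; [|split; [|split; [|split]]].
- by rewrite size_map size_enum_ord size_map.
- move=> q /mapP [i _ ->] /=; rewrite Xi; apply: sZ.
  by apply: mem_nth; rewrite -(size_map snd s) ltn_ord.
- rewrite vecs /vec big_map big_enum /=.
  under eq_bigr do rewrite scalerDl.
  rewrite big_split /= -[RHS]addr0; congr (_ + _).
  under eq_bigr do rewrite -scalerA.
  by rewrite -scaler_sumr k0 scaler0.
- by rewrite /cost big_map big_enum /= -/(cost s) costs.
- exists (c j + t * k j, X`_j); split => //.
  by apply: map_f; rewrite mem_enum.
Qed.

Lemma reduce s : inZ s -> exists s', inZ s' /\ vec s' = vec s /\ cost s' <= cost s /\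
   free (map snd s').
Proof.
move: {2}(size s) (leqnn (size s)) => n; elim: n s => [|n IH] s.
  rewrite leqn0 size_eq0 => /eqP -> _; exists [::]; split => //; split => //.
  by split => //; rewrite nil_free.
move=> sn sZ.
case: (boolP (free (map snd s))) => [fr|nf]; first by exists s.
case: (pselect (exists q, q \in s /\ q.1 = 0)) => [hz|nz].
  have [s' [s's [s'Z [vs cs]]]] := remove_zero sZ hz.
  have [s'' [Z'' [v'' [c'' f'']]]] := IH s' (leq_trans s's sn) s'Z.
  by exists s''; rewrite v'' vs -cs.
have [s1 [e1 [Z1 [v1 [c1 h1]]]]] := reduce_step sZ nf nz.
have [s' [s's [s'Z [vs cs]]]] := remove_zero Z1 h1.
have s'n : (size s' <= n)%N by rewrite -ltnS (leq_trans _ sn) // -e1.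
have [s'' [Z'' [v'' [c'' f'']]]] := IH s' s'n s'Z.
exists s''; rewrite v'' vs v1; split => //; split => //; split => //.
by rewrite (le_trans c'') // cs.
Qed.
End Reps.

Section Final.
Variables (R : realType) (V : vectType R) (p : R) (nrm : V -> R) (Z : set V).
Hypotheses (p0 : 0 < p) (p1 : p <= 1) (hn : is_pnorm p nrm)
  (ZB : Z `<=` unit_ball nrm) (hco : co_p p Z = unit_ball nrm).

Lemma nrm0 : nrm 0 = 0.
Proof. by case: hn => _ _ hom _; rewrite -(scale0r (0 : V)) hom normr0 mul0r. Qed.

Lemma nrm_sum (I : Type) (r : seq I) (P : pred I) (F : I -> V) :
  nrm (\sum_(i <- r | P i) F i) `^ p <= \sum_(i <- r | P i) nrm (F i) `^ p.
Proof.
case: hn => _ _ _ tri.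
apply: (big_ind2 (fun v x => nrm v `^ p <= x)).
- by rewrite nrm0 powR0 // gt_eqF.
- by move=> a b c d H1 H2; apply: le_trans (tri _ _) _; exact: lerD.
- by [].
Qed.

Lemma upper (b : seq V) (a : 'I_(size b) -> R) x :
  Zbasis Z b -> x = \sum_(i < size b) a i *: b`_i -> nrm x <= pcoef_norm p a.
Proof.
case: (hn) => nge0 _ hom _ [_ bZ] ->.
have H := nrm_sum (index_enum 'I_(size b)) xpredT (fun i => a i *: b`_i).
set y := \sum_(i < size b) a i *: b`_i in H *.
have H2 : nrm y `^ p <= \sum_(i < size b) `|a i| `^ p.
  apply: le_trans H _; apply: ler_sum => i _.
  rewrite hom powRM ?nge0 // ler_piMr ?powR_ge0 //.
  have : nrm b`_i <= 1 by apply: ZB; apply: bZ; apply: mem_nth.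
  move=> h; have := @ge0_ler_powR _ p (ltW p0) (nrm b`_i) 1.
  by rewrite powR1; apply; rewrite ?nnegrE ?nge0.
rewrite /pcoef_norm -[nrm y](powRK (nge0 y) (lt0r_neq0 p0)).
apply: ge0_ler_powR => //; first by rewrite invr_ge0 ltW.
- by rewrite nnegrE powR_ge0.
- by rewrite nnegrE sumr_ge0 // => i _; exact: powR_ge0.
Qed.

Let S := [set v | exists s, inZ Z s /\ v = vec s /\ cost p s <= 1].

Lemma S_pconvex : p_convex p S.
Proof.
move=> x y l m [s1 [Z1 [-> c1]]] [s2 [Z2 [-> c2]]] l0 m0 lm.
pose sc (t : R) := map (fun q : R * V => (t * q.1, q.2)).
have vsc t s : vec (sc t s) = t *: vec s.
  by rewrite /vec big_map scaler_sumr; apply: eq_bigr => q _; rewrite scalerA.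
have csc t s : 0 <= t -> cost p (sc t s) = t `^ p * cost p s.
  move=> t0; rewrite /cost big_map mulr_sumr; apply: eq_bigr => q _.
  by rewrite normrM powRM // (ger0_norm t0).
exists (sc l s1 ++ sc m s2); split; [|split].
- move=> q; rewrite mem_cat => /orP [] /mapP [q' q's ->] /=; [exact: Z1 q' q's|exact: Z2 q' q's].
- by rewrite /vec big_cat /= -!/(vec _) !vsc.
- rewrite /cost big_cat /= -!/(cost _ _) !csc // -lm.
  by apply: lerD; rewrite ler_piMr ?powR_ge0.
Qed.

Lemma ZS : Z `<=` S.
Proof.
move=> z Zz; exists [:: (1, z)]; split; [|split].
- by move=> q; rewrite inE => /eqP -> /=.
- by rewrite /vec big_seq1 scale1r.
- by rewrite /cost big_seq1 normr1 powR1.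
Qed.

Lemma rep x : exists s, inZ Z s /\ x = vec s /\ cost p s <= nrm x `^ p.
Proof.
case: (hn) => nge0 ndef hom _.
have [->|x0] := eqVneq x 0.
  exists [::]; split => //; split; first by rewrite /vec big_nil.
  by rewrite /cost big_nil powR_ge0.
have nx0 : 0 < nrm x by rewrite lt_neqAle nge0 andbT; apply/eqP => /esym/ndef; apply/eqP.
have : unit_ball nrm ((nrm x)^-1 *: x).
  by rewrite /unit_ball /= hom ger0_norm ?invr_ge0 ?nge0 // mulVf ?gt_eqF.
rewrite -hco => /(_ S S_pconvex ZS) [s [sZ [ex cs]]].
exists (map (fun q : R * V => (nrm x * q.1, q.2)) s); split; [|split].
- by move=> q /mapP [q' q's ->]; exact: sZ q' q's.
- rewrite /vec big_map -[LHS](scalerKV (lt0r_neq0 nx0)) ex scaler_sumr.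
  by apply: eq_bigr => q _; rewrite scalerA.
- rewrite /cost big_map.
  under eq_bigr do rewrite normrM powRM // (ger0_norm (nge0 x)).
  rewrite -mulr_sumr -[X in _ <= X]mulr1 ler_wpM2l ?powR_ge0 //.
Qed.

Lemma extend k (X : seq V) : (\dim (fullv : {vspace V}) - size X <= k)%N -> free X ->
  (forall v, v \in X -> Z v) ->
  exists Y, (forall v, v \in Y -> Z v) /\ basis_of fullv (Y ++ X).
Proof.
elim: k X => [|k IH] X hk fX XZ.
  exists [::]; split => //; rewrite cat0s basisEfree fX subvf /=.
  by rewrite -subn_eq0 -leqn0.
case: (leqP (\dim (fullv : {vspace V})) (size X)) => [hd|hd].
  by exists [::]; split => //; rewrite cat0s basisEfree fX subvf.
have [v vX] : exists v, v \notin <<X>>%VS.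
  case: (pselect (exists v, v \notin <<X>>%VS)) => // H; exfalso.
  have : (fullv <= <<X>>)%VS.
    apply/subvP => v _; apply: contraT => vn; exfalso; apply: H; by exists v.
  move/dimvS; rewrite (eqP fX) => h; move: (leq_trans hd h); by rewrite ltnn.
have [z [Zz zX]] : exists z, Z z /\ z \notin <<X>>%VS.
  case: (pselect (exists z, Z z /\ z \notin <<X>>%VS)) => // H; exfalso.
  have [s [sZ [vs _]]] := rep v.
  move/negP: vX; apply; rewrite vs /vec big_seq; apply: memv_suml => q qs.
  apply: memvZ; apply: contraT => qn; exfalso; apply: H; exists q.2; split => //; exact: sZ q qs.
have h1 : (\dim (fullv : {vspace V}) - size (z :: X) <= k)%N.
  by move: hk; rewrite /= subnS; case: (_ - _)%N.
have h2 : free (z :: X) by rewrite free_cons zX fX.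
have h3 : forall w, w \in z :: X -> Z w.
  by move=> w; rewrite inE => /orP [/eqP ->|/XZ].
have [Y [YZ bY]] := IH (z :: X) h1 h2 h3.
exists (rcons Y z); split; last by rewrite cat_rcons.
by move=> w; rewrite mem_rcons inE => /orP [/eqP ->|/YZ].
Qed.

Lemma existence x : exists (b : seq V) (a : 'I_(size b) -> R),
        Zbasis Z b /\ x = \sum_(i < size b) a i *: b`_i /\
        pcoef_norm p a = nrm x.
Proof.
case: (hn) => nge0 _ _ _.
have [s0 [Z0 [v0 c0]]] := rep x.
have [s [sZ [vs [cs fs]]]] := reduce p0 p1 Z0.
have [Y [YZ bY]] := extend (leqnn _) fs (fun v => fun h => match mapP h with ex_intro2 q qs e => eq_ind_r Z (sZ q qs) e end).
pose s' := [seq (0, y) | y <- Y] ++ s.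
have ms' : map snd s' = Y ++ map snd s.
  by rewrite map_cat; congr (_ ++ _); elim: Y {YZ bY s'} => //= y Y ->.
pose a := fun i : 'I_(size (map snd s')) => (nth (0, 0) s' i).1.
have bi (i : 'I_(size (map snd s'))) : (map snd s')`_i = (nth (0,0) s' i).2.
  by rewrite (nth_map (0,0)) // -(size_map snd s') ltn_ord.
have vs' : vec s' = vec s.
  rewrite /vec big_cat /= big_map big1 ?add0r // => y _; exact: scale0r.
have cs' : cost p s' = cost p s.
  rewrite /cost big_cat /= big_map big1 ?add0r // => y _.
  by rewrite normr0 powR0 // gt_eqF.
have hx : x = \sum_(i < size (map snd s')) a i *: (map snd s')`_i.
  rewrite v0 -vs -vs' /vec (big_nth (0,0)) -(size_map snd s') big_mkord.
  by apply: eq_bigr => i _; rewrite bi.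
have hb : Zbasis Z (map snd s').
  split; first by rewrite ms'.
  move=> v /mapP [q]; rewrite mem_cat => /orP [/mapP [y yY ->] -> /=|qs ->].
    exact: YZ.
  exact: sZ.
exists (map snd s'), a; split => //; split => //.
apply/le_anti/andP; split; last exact: upper hb hx.
have -> : pcoef_norm p a = cost p s `^ p^-1.
  rewrite /pcoef_norm -cs' /cost (big_nth (0,0)) -(size_map snd s') big_mkord.
  by [].
rewrite -[X in _ <= X](powRK (nge0 x) (lt0r_neq0 p0)).
apply: ge0_ler_powR; first by rewrite invr_ge0 ltW.
- by rewrite nnegrE cost_ge0.
- by rewrite nnegrE powR_ge0.
exact: le_trans cs c0.
Qed.
End Final.

Unset Implicit Arguments.
Theorem lemma2p4 (R : realType) (V : vectType R) (p : R) (nrm : V -> R)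
  (Z : set V) :
  0 < p -> p <= 1 ->
  is_pnorm p nrm -> pnorm_complete nrm ->
  (exists x : V, x != 0) ->
  Z `<=` unit_ball nrm -> symmetric_set Z ->
  co_p p Z = unit_ball nrm ->
  forall x : V,
    (exists (b : seq V) (a : 'I_(size b) -> R),
        Zbasis Z b /\ x = \sum_(i < size b) a i *: b`_i /\
        pcoef_norm p a = nrm x) /\
    (forall (b : seq V) (a : 'I_(size b) -> R),
        Zbasis Z b -> x = \sum_(i < size b) a i *: b`_i ->
        nrm x <= pcoef_norm p a).
Proof.
move=> p0 p1 hn _ _ ZB _ hco x; split.
- exact: existence.
- by move=> b a; exact: upper.
Qed.
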